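(* Let $z_1,\dots,z_N$ be independent with $z_i\sim\mathrm{Bernoulli}(q_i)$, $0<q_i<1$ for every $i\in[N]$, and let $S=\sum_{i=1}^Nz_i$. If $\min_{i\in[N]}q_i>\frac1N$, then $\Pr\{S>N\min_{i\in[N]}q_i\}>\frac14$. *)

(* Defs.v *)
From HB Require Import structures.
From mathcomp Require Import all_boot all_order all_algebra.
From mathcomp Require Import all_classical all_reals all_analysis.
Set Implicit Arguments. Unset Strict Implicit. Unset Printing Implicit Defensive.
Import Order.TTheory GRing.Theory Num.Theory.
Local Open Scope classical_set_scope.
Local Open Scope ring_scope.

(* z_1,...,z_N are mutually independent Bernoulli(q_i) random variables on
   the probability space (T, P), encoded as boolean-valued maps
   (z i w = true  <->  z_i(w) = 1).
   - each event {z_i = 1} is measurable;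
   - P{z_i = 1} = q_i;
   - mutual independence of the discrete random variables: the joint
     probability mass function factorizes,
       P{z_1 = b_1, ..., z_N = b_N} = prod_i P{z_i = b_i}
     for every b in {0,1}^N. *)
Definition indep_bernoulli (d : measure_display) (T : measurableType d)
  (R : realType) (P : probability T R) (N : nat)
  (z : 'I_N -> T -> bool) (q : 'I_N -> R) : Prop :=
  [/\ (forall i, measurable [set w | z i w]),
      (forall i, P [set w | z i w] = (q i)%:E) &
      (forall b : 'I_N -> bool,
         P [set w | forall i, z i w = b i] =
         (\prod_(i < N) fine (P [set w | z i w = b i]))%:E)].

Definition bsum (T : Type) (R : realType) (N : nat) (z : 'I_N -> T -> bool)
  (w : T) : R := (\sum_(i < N) (z i w : nat))%:R.

(* min_{i in [N]} q_i (meaningful for N >= 1) *)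
Definition qmin (R : realType) (N : nat) (q : 'I_N -> R) : R :=
  \big[Order.min/1]_(i < N) q i.

(* Main.v *)
From Pilot Require Import Defs.
From HB Require Import structures.
From mathcomp Require Import all_boot all_order all_algebra.
From mathcomp Require Import all_classical all_reals all_analysis.
From mathcomp.real_closed Require Import polyrcf.
From mathcomp Require Import ring lra.
Import Order.TTheory GRing.Theory Num.Theory.
Local Open Scope ring_scope.

Module PilotAux.
Set Implicit Arguments. Unset Strict Implicit. Unset Printing Implicit Defensive.

Section PBdef.
Variable R : comNzRingType.
Fixpoint pb (s : seq R) (k : nat) : R :=
  if s is r :: s' then r * (if k is k'.+1 then pb s' k' else 0) + (1 - r) * pb s' k
  else (k == 0%N)%:R.
Fixpoint tl (s : seq R) (k : nat) : R :=
  if s is r :: s' then (if k is k'.+1 then r * tl s' k' + (1 - r) * tl s' k else 1)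
  else (k == 0%N)%:R.

Lemma tl0 s : tl s 0 = 1. Proof. by case: s. Qed.

Lemma tl_pb s k : tl s k = pb s k + tl s k.+1.
Proof.
elim: s k => [|r s IH] [|k] /=; rewrite ?addr0 ?add0r //.
- have := IH 0%N; rewrite !tl0 => h.
  rewrite mulr0 add0r mulr1 (_ : tl s 1 = 1 - pb s 0); first ring.
  by rewrite {1}h; ring.
- by rewrite (IH k) (IH k.+1); ring.
Qed.

Lemma tl_cons r s k : tl (r :: s) k.+1 = tl s k.+1 + r * pb s k.
Proof. by rewrite /= (tl_pb s k); ring. Qed.

Lemma tl_big s k : (size s < k)%N -> tl s k = 0.
Proof.
elim: s k => [|r s IH] [|k] //= h.
rewrite !IH ?mulr0 ?addr0 //; exact: (ltn_trans _ h).
Qed.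

Lemma tl_full y n : tl (nseq n y) n = y ^+ n.
Proof.
elim: n => [|n IH] /=; first by [].
by rewrite IH tl_big ?size_nseq // mulr0 addr0 exprS.
Qed.

Lemma pb_nseq y m k :
  pb (nseq m y) k = 'C(m, k)%:R * y ^+ k * (1 - y) ^+ (m - k).
Proof.
elim: m k => [|m IH] [|k] /=.
- by rewrite bin0 !expr0 !mulr1.
- by rewrite bin0n mul0r mul0r.
- by rewrite mulr0 add0r IH bin0 !expr0 !mul1r subn0 exprS.
- rewrite !IH binS natrD.
  case: (ltnP m k.+1) => hmk.
  + rewrite (bin_small hmk) mul0r mul0r mulr0 addr0 subSS.
    by rewrite exprS; ring.
  + rewrite subSS.
    have -> : (m - k = (m - k.+1).+1)%N by rewrite subnSK.
    rewrite !exprS; ring.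
Qed.
End PBdef.


Section Deriv.
Variable R : rcfType.
Implicit Types (y : {poly R}).

Lemma deriv_nat (n : nat) : (n%:R : {poly R})^`() = 0.
Proof. by rewrite -polyC_natr derivC. Qed.

Lemma dtl y n k :
  (tl (nseq n.+1 y) k.+1)^`() = n.+1%:R * y^`() * pb (nseq n y) k.
Proof.
elim: n k => [|n IH] k.
  by rewrite /= !poly.derivE /= mul0rn; ring.
have -> : nseq n.+2 y = y :: nseq n.+1 y by [].
have -> : pb (nseq n.+1 y) k = pb (y :: nseq n y) k by [].
have dk : (tl (nseq n.+1 y) k)^`() = n.+1%:R * y^`() * (if k is k'.+1 then pb (nseq n y) k' else 0).
  case: k => [|k]; first by rewrite tl0 -polyC1 derivC; ring.
  by rewrite IH.
rewrite (_ : tl (y :: nseq n.+1 y) k.+1 = y * tl (nseq n.+1 y) k + (1 - y) * tl (nseq n.+1 y) k.+1) //.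
rewrite derivD !derivM derivB -polyC1 derivC polyC1 IH dk (tl_pb (nseq n.+1 y) k).
rewrite (_ : pb (y :: nseq n y) k = y * (if k is k'.+1 then pb (nseq n y) k' else 0) + (1 - y) * pb (nseq n y) k) //.
rewrite [(n.+2)%:R](natrD _ 1 n.+1).
ring.
Qed.

Lemma horner_pb (s : seq {poly R}) k x : (pb s k).[x] = pb (map (horner^~ x) s) k.
Proof.
elim: s k => [|r s IH] k /=; first by case: k => [|k] /=; rewrite hornerE.
by case: k => [|k]; rewrite !hornerE ?IH.
Qed.

Lemma horner_tl (s : seq {poly R}) k x : (tl s k).[x] = tl (map (horner^~ x) s) k.
Proof.
elim: s k => [|r s IH] k /=; first by case: k => [|k] /=; rewrite hornerE.
by case: k => [|k]; rewrite !hornerE ?IH.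
Qed.
End Deriv.


Section Chain.
Variable R : rcfType.

Lemma pb_nseq_ge0 (r : R) m k : 0 <= r <= 1 -> 0 <= pb (nseq m r) k.
Proof.
move=> /andP[r0 r1]; rewrite pb_nseq.
by rewrite !mulr_ge0 ?exprn_ge0 ?subr_ge0.
Qed.

Lemma mode (r : R) m c : 0 <= r <= 1 -> (m.+1)%:R * r <= c.+1%:R ->
  pb (nseq m r) c.+1 <= pb (nseq m r) c.
Proof.
move=> /andP[r0 r1] hr; rewrite !pb_nseq.
case: (ltnP m c.+1) => hmc.
  by rewrite (bin_small hmc) !mul0r !mulr_ge0 ?exprn_ge0 ?subr_ge0.
have hcm : (c <= m)%N by apply: ltnW.
have -> : (m - c = (m - c.+1).+1)%N by rewrite subnSK.
have hb := mul_bin_left m c.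
have hbR : (c.+1)%:R * ('C(m, c.+1))%:R = (m%:R - c%:R) * ('C(m, c))%:R :> R.
  by rewrite -natrB // -!natrM hb.
set a := ('C(m, c.+1))%:R : R.
set b := ('C(m, c))%:R : R.
set K := r ^+ c * (1 - r) ^+ (m - c.+1).
have K0 : 0 <= K by rewrite mulr_ge0 ?exprn_ge0 ?subr_ge0.
have b0 : 0 <= b by rewrite /b ler0n.
have -> : a * r ^+ c.+1 * (1 - r) ^+ (m - c.+1) = (a * r) * K.
  by rewrite /K exprS; ring.
have -> : b * r ^+ c * (1 - r) ^+ (m - c.+1).+1 = (b * (1 - r)) * K.
  by rewrite /K exprS; ring.
apply: ler_wpM2r => //.
have c1 : 0 < (c.+1)%:R :> R by rewrite ltr0n.
rewrite -(ler_pM2l c1) -subr_ge0.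
have -> : c.+1%:R * (b * (1 - r)) - c.+1%:R * (a * r)
   = b * (c.+1%:R - m.+1%:R * r).
  have e : c.+1%:R * (a * r) = (m%:R - c%:R) * b * r by rewrite mulrA hbR.
  rewrite e !mulrSr; ring.
by rewrite mulr_ge0 // subr_ge0.
Qed.
End Chain.

Section Chain2.
Variable R : rcfType.

Lemma map_nseq_h (T U : Type) (f : T -> U) n x : map f (nseq n x) = nseq n (f x).
Proof. by elim: n => //= n ->. Qed.

Lemma chain (n c : nat) (lam : R) : (0 < n)%N -> 0 <= lam -> lam <= c.+1%:R ->
  lam <= n%:R ->
  tl (nseq n (lam / n%:R)) c.+2 <= tl (nseq n.+1 (lam / n.+1%:R)) c.+2.
Proof.
case: n => [//|n'] _ l0 lc ln.
set n := n'.+1.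
have n0 : 0 < n%:R :> R by rewrite ltr0n.
set p := lam / n%:R.
have p0 : 0 <= p by rewrite divr_ge0 // ltW.
have p1 : p <= 1 by rewrite ler_pdivrMr // mul1r.
have np : n%:R * p = lam by rewrite /p mulrC divfK // gt_eqF.
set d := p / (n.+1)%:R.
have n10 : 0 < (n.+1)%:R :> R by rewrite ltr0n.
have d0 : 0 <= d by rewrite divr_ge0 // ltW.
have nd : (n.+1)%:R * d = p by rewrite /d mulrC divfK // gt_eqF.
set Y : {poly R} := p%:P - 'X.
set x : {poly R} := n%:R * 'X.
set F := tl (x :: nseq n Y) c.+2.
have tlC : forall (r : R) s k, tl (r :: s) k.+1 = r * tl s k + (1 - r) * tl s k.+1 by [].
have F0 : F.[0] = tl (nseq n p) c.+2.
  rewrite /F horner_tl map_cons map_nseq_h.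
  have -> : x.[0] = 0 by rewrite /x mulr_natl hornerMn hornerX mul0rn.
  have -> : Y.[0] = p by rewrite /Y !hornerE subr0.
  by rewrite tlC mul0r add0r subr0 mul1r.
have Fd : F.[d] = tl (nseq n.+1 (lam / n.+1%:R)) c.+2.
  rewrite /F horner_tl map_cons map_nseq_h.
  have e1 : x.[d] = lam / n.+1%:R.
    by rewrite /x mulr_natl hornerMn hornerX -mulr_natl -np /d mulrA.
  have e2 : Y.[d] = lam / n.+1%:R.
    rewrite /Y hornerD hornerN hornerC hornerX -e1 /x mulr_natl hornerMn hornerX -mulr_natl -{1}nd mulrSr; ring.
  by rewrite e1 e2.
have dF : F^`() = n%:R * (Y - x) * (pb (nseq n' Y) c - pb (nseq n' Y) c.+1).
  rewrite /F (_ : tl (x :: nseq n Y) c.+2 = x * tl (nseq n Y) c.+1 + (1 - x) * tl (nseq n Y) c.+2) //.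
  rewrite derivD !derivM derivB -polyC1 derivC polyC1 !dtl.
  rewrite (tl_pb (nseq n Y) c.+1).
  rewrite (_ : pb (nseq n Y) c.+1 = Y * pb (nseq n' Y) c + (1 - Y) * pb (nseq n' Y) c.+1) //.
  rewrite /x /Y derivM deriv_nat derivB derivC derivX.
  move: (pb (nseq n' (p%:P - 'X)) c) (pb (nseq n' (p%:P - 'X)) c.+1) (tl (nseq n (p%:P - 'X)) c.+2) => A B T.
  rewrite /n; move: (p%:P) ('X : {poly R}) => P0 X0.
  ring.
rewrite -F0 -Fd.
have dlep : d <= p by rewrite -nd ler_peMl // mulrSr lerDr ler0n.
apply: (ler_hornerW (a:=0) (b:=d)).
all: try solve [rewrite in_itv /= ?lexx ?d0 // | exact: d0].
move=> t; rewrite in_itv /= => /andP[t0 td].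
rewrite dF !(hornerM, hornerD, hornerN) !horner_pb !map_nseq_h.
have hx : x.[t] = n%:R * t by rewrite /x mulr_natl hornerMn hornerX -mulr_natl.
have hY : Y.[t] = p - t by rewrite /Y hornerD hornerN hornerC hornerX.
have hn : (n%:R : {poly R}).[t] = n%:R by rewrite hornerMn hornerC.
rewrite hn hornerC hornerX hY.
have ntd : n.+1%:R * t <= n.+1%:R * d by rewrite ler_pM2l // ltW.
rewrite nd mulrSr in ntd.
apply: mulr_ge0; first apply: mulr_ge0; first by rewrite ler0n.
- lra.
rewrite subr_ge0; apply: mode.
- apply/andP; split; lra.
- have : n%:R * t >= 0 by rewrite mulr_ge0 ?ler0n // ltW.
  rewrite mulrBr -/n; move: np lc => np lc; lra.
Qed.
End Chain2.


Section Core.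
Variable R : rcfType.
Definition in01 (r : R) := (0 <= r) && (r <= 1).

Lemma pb_ge0 (s : seq R) k : all in01 s -> 0 <= pb s k.
Proof.
elim: s k => [|r s IH] k /=; first by rewrite ler0n.
move=> /andP[/andP[r0 r1] hs].
have h1 : 0 <= (if k is k'.+1 then pb s k' else 0).
  by case: k => [|k]; rewrite ?lexx ?IH.
by rewrite addr_ge0 ?mulr_ge0 ?IH ?subr_ge0.
Qed.

Definition lep (a b : R) := [&& 0 <= a, a <= b & b <= 1].

Lemma tl_mono2 (s1 s2 : seq R) k : all2 lep s1 s2 -> tl s1 k <= tl s2 k.
Proof.
elim: s1 s2 k => [|a s1 IH] [|b s2] k //=.
move=> /andP[/andP[a0 /andP[ab b1]] h].
case: k => [|k]; first by [].
have hA := IH _ k h.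
have hB := IH _ k.+1 h.
have h2 : all in01 s2.
  elim: s1 s2 h {IH hA hB} => [|x s1 IH1] [|y s2] //= /andP[/andP[x0 /andP[xy y1]] h].
  by rewrite /in01 (le_trans x0 xy) y1 /= IH1.
have hAB : tl s2 k.+1 <= tl s2 k by rewrite (tl_pb s2 k) lerDr pb_ge0.
nra.
Qed.

Lemma all2_nseq (a : R) (s : seq R) :
  (forall r, r \in s -> lep a r) -> all2 lep (nseq (size s) a) s.
Proof.
elim: s => [|r s IH] //= h.
apply/andP; split; first by apply: h; rewrite mem_head.
by apply: IH => x xs; apply: h; rewrite in_cons xs orbT.
Qed.

Lemma chain_all c N : (c.+1 < N)%N ->
  (c.+1%:R / c.+2%:R) ^+ c.+2 <= tl (nseq N (c.+1%:R / N%:R)) c.+2 :> R.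
Proof.
elim: N => [//|N IH] h.
case: (ltngtP c.+1 N) => hN.
- apply: le_trans (IH hN) _.
  apply: (@chain R N c c.+1%:R).
  - exact: (ltn_trans _ hN).
  - exact: ler0n.
  - exact: lexx.
  - by rewrite ler_nat ltnW.
- by move: h; rewrite ltnS leqNgt hN.
- by rewrite -hN tl_full.
Qed.

Lemma tangent (a b : R) n : 0 <= b -> b <= a ->
  b ^+ n * (b + n.+1%:R * (a - b)) <= a ^+ n.+1.
Proof.
move=> b0 ba; elim: n => [|n IH].
  by rewrite expr0 mul1r expr1 mul1r addrC subrK.
rewrite exprS [a ^+ n.+2]exprS.
have hbn : 0 <= b ^+ n by rewrite exprn_ge0.
have ha : 0 <= a by apply: le_trans ba.
apply: le_trans (ler_wpM2l ha IH).
have -> : b * b ^+ n * (b + n.+2%:R * (a - b)) =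
  a * (b ^+ n * (b + n.+1%:R * (a - b))) - b ^+ n * (n.+1%:R * (a - b) ^+ 2).
  rewrite !mulrSr; ring.
rewrite lerBlDr lerDl.
by rewrite mulr_ge0 // mulr_ge0 ?ler0n // sqr_ge0.
Qed.
End Core.

Section Pow.
Variable R : rcfType.
Definition vv (k : nat) : R := (k%:R / k.+1%:R) ^+ k.+1.

Lemma vv_mono k : vv k <= vv k.+1.
Proof.
rewrite /vv !expr_div_n.
have h1 : 0 < k.+1%:R ^+ k.+1 :> R by rewrite exprn_gt0 // ltr0n.
have h2 : 0 < k.+2%:R ^+ k.+2 :> R by rewrite exprn_gt0 // ltr0n.
rewrite ler_pdivrMr // mulrAC ler_pdivlMr //.
set K : R := k%:R.
have -> : k.+1%:R = K + 1 :> R by rewrite /K mulrSr.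
have -> : k.+2%:R = K + 2 :> R by rewrite /K !mulrSr; ring.
have K0 : 0 <= K by rewrite /K ler0n.
have hb : K * (K + 2) <= (K + 1) ^+ 2 by rewrite expr2; nra.
have T' := @tangent R ((K + 1) ^+ 2) (K * (K + 2)) k (mulr_ge0 K0 (addr_ge0 K0 (ler0n _ 2))) hb.
rewrite exprMn -exprAC (exprS (K + 1) k) (exprS K k) (exprS (K+2) k.+1) (exprS (K+2) k) in T' *.
set P := (K + 1) ^+ k in T' *.
set Q1 := K ^+ k in T' *.
set Q2 := (K + 2) ^+ k in T' *.
have Q10 : 0 <= Q1 by rewrite exprn_ge0.
have Q20 : 0 <= Q2 by rewrite exprn_ge0 // addr_ge0 // ler0n.
have P0 : 0 <= P by rewrite exprn_ge0 // addr_ge0.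
rewrite (exprS (K + 1) k.+1) (exprS (K + 1) k) -/P.
have Q0 : 0 <= Q1 * Q2 by rewrite mulr_ge0.
rewrite (_ : k.+1%:R = K + 1) in T'; last by rewrite /K mulrSr.
have K1 : 0 <= K + 1 by rewrite addr_ge0.
have T2 := ler_wpM2l K1 T'.
have -> : (K + 1) * ((K + 1) * P) * ((K + 1) * P) = (K + 1) * ((K + 1) * P) ^+ 2 by ring.
apply: le_trans T2.
rewrite -subr_ge0.
have -> : (K + 1) * (Q1 * Q2 * (K * (K + 2) + (K + 1) * ((K + 1) ^+ 2 - K * (K + 2)))) -
  K * Q1 * ((K + 2) * ((K + 2) * Q2)) = Q1 * Q2 by ring.
exact: Q0.
Qed.

Lemma vv_ge k : (2 <= k)%N -> vv 2 <= vv k.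
Proof.
elim: k => [//|k IH] h.
case: (ltngtP 2 k.+1) => hk.
- by apply: le_trans (IH hk) (vv_mono k).
- by move: h; rewrite leqNgt hk.
- by rewrite hk.
Qed.

Lemma vv_gt k : (2 <= k)%N -> 1 / 4%:R < vv k.
Proof.
move=> /vv_ge; apply: lt_le_trans.
rewrite /vv.
have -> : (2%:R / 3%:R) ^+ 3 = 8%:R / 27%:R :> R.
  rewrite expr_div_n; congr (_ / _); rewrite -natrX //.
rewrite ltr_pdivrMr ?ltr0n // mulrAC ltr_pdivlMr ?ltr0n //; lra.
Qed.
End Pow.

Section Core2.
Variable R : rcfType.

Lemma all2_nseq2 (x y : R) n : lep x y -> all2 (@lep R) (nseq n x) (nseq n y).
Proof. by move=> h; elim: n => //= n ->; rewrite h. Qed.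

Lemma core (s : seq R) (p : R) (c : nat) :
  (forall r, r \in s -> p <= r < 1) -> 0 < p -> 1 < (size s)%:R * p ->
  c.+1%:R <= (size s)%:R * p -> (size s)%:R * p < c.+2%:R ->
  1 / 4%:R < tl s c.+2.
Proof.
move=> hs p0 h1 hc1 hc2.
set N := size s in h1 hc1 hc2 *.
have sne : s != [::].
  apply/eqP => s0; move: h1; rewrite /N s0 mul0r; lra.
have p1 : p < 1.
  case: s sne hs {N h1 hc1 hc2} => [//|r s] _ hs.
  by have /andP[pr r1] := hs r (mem_head _ _); apply: le_lt_trans r1.
have N0 : 0 < N%:R :> R.
  rewrite ltr0n lt0n; apply/eqP => N0; move: h1; rewrite N0 mul0r; lra.
have NpN : N%:R * p < N%:R by rewrite -{2}(mulr1 N%:R) ltr_pM2l.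
have cN : (c.+1 < N)%N by rewrite -(ltr_nat R); apply: le_lt_trans NpN.
pose a : R := c.+1%:R / N%:R.
have ap : a <= p by rewrite /a ler_pdivrMr // mulrC.
have a0 : 0 < a by rewrite /a divr_gt0 // ltr0n.
have st1 : tl (nseq N p) c.+2 <= tl s c.+2.
  apply: tl_mono2; apply: all2_nseq => r /hs /andP[pr r1].
  by rewrite /lep (ltW p0) pr (ltW r1).
have st2 : tl (nseq N a) c.+2 <= tl (nseq N p) c.+2.
  by apply: tl_mono2; apply: all2_nseq2; rewrite /lep (ltW a0) ap (ltW p1).
have st3 : vv R c.+1 <= tl (nseq N a) c.+2 by apply: chain_all.
have ea : a = c.+1%:R / N%:R by [].
clearbody a N.
case: c => [|c'] in hc1 hc2 cN ap a0 st1 st2 st3 ea *; last first.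
  apply: lt_le_trans (le_trans st3 (le_trans st2 st1)).
  exact: vv_gt.
case: N => [|N'] in N0 NpN cN st1 st2 st3 ap a0 ea h1 hc1 hc2 *; first by [].
have aN : a = 1 / N'.+1%:R by rewrite ea.
have ap' : a < p.
  by rewrite aN ltr_pdivrMr // mulrC.
have a1 : a < 1 by apply: lt_trans p1.
have st4 : tl (p :: nseq N' a) 2 <= tl (nseq N'.+1 p) 2.
  apply: tl_mono2 => /=; apply/andP; split.
    by rewrite /lep lexx (ltW p0) (ltW p1).
  by apply: all2_nseq2; rewrite /lep (ltW a0) ap (ltW p1).
have pbpos : 0 < pb (nseq N' a) 1.
  rewrite pb_nseq bin1 expr1.
  case: N' {st1 st2 st3 st4 N0 NpN aN ea h1 hc1 hc2} cN => [//|N''] _.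
  by rewrite !mulr_gt0 ?ltr0n ?exprn_gt0 ?subr_gt0.
have st5 : tl (nseq N'.+1 a) 2 < tl (p :: nseq N' a) 2.
  rewrite (_ : nseq N'.+1 a = a :: nseq N' a) // !tl_cons ltrD2l.
  by rewrite ltr_pM2r.
have hv : vv R 1 = 1 / 4%:R.
  rewrite /vv expr_div_n expr1n -natrX //.
apply: le_lt_trans (lt_le_trans st5 (le_trans st4 st1)).
by rewrite -hv.
Qed.
End Core2.


Section Bridge.
Variable R : realType.

Definition G (s : seq R) : {poly R} := \prod_(r <- s) ((1 - r)%:P + r *: 'X).

Lemma coefG s k : (G s)`_k = pb s k.
Proof.
elim: s k => [|r s IH] k.
  by rewrite /G big_nil coef1.
rewrite /G big_cons -/(G s) mulrDl coefD coefCM -scalerAl coefZ coefXM IH /=.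
by case: k => [|k] /=; rewrite ?mulr0 ?addr0 ?add0r // IH addrC.
Qed.

Lemma tl_sum (s : seq R) t d : tl s t = \sum_(t <= k < t + d) pb s k + tl s (t + d).
Proof.
elim: d => [|d IH]; first by rewrite addn0 big_geq // add0r.
by rewrite IH !addnS big_nat_recr ?leq_addr //= (tl_pb s (t + d)) addrA.
Qed.

Lemma tl_sum_ord (s : seq R) t : (t <= (size s).+1)%N ->
  tl s t = \sum_(k < (size s).+1 | (t <= k)%N) pb s k.
Proof.
move=> h; rewrite (tl_sum s t ((size s).+1 - t)) subnKC // tl_big // addr0.
by rewrite big_geq_mkord.
Qed.

Definition cnt N (f : {ffun 'I_N -> bool}) := (\sum_(i < N) (f i : nat))%N.

Lemma cnt_le N (f : {ffun 'I_N -> bool}) : (cnt f <= N)%N.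
Proof.
rewrite /cnt -[X in (_ <= X)%N]card_ord -sum1_card.
by apply: leq_sum => i _; case: (f i).
Qed.

Definition wt N (w : 'I_N -> R) (f : {ffun 'I_N -> bool}) :=
  \prod_(i < N) (if f i then w i else 1 - w i).

Lemma G_ffun N (w : 'I_N -> R) :
  G (map w (index_enum 'I_N)) = \sum_(f : {ffun 'I_N -> bool}) wt w f *: 'X^(cnt f).
Proof.
rewrite /G big_map.
have -> : \prod_(i <- index_enum 'I_N) ((1 - w i)%:P + w i *: 'X) =
   \prod_(i < N) \sum_(b : bool) ((if b then w i else 1 - w i) *: 'X^(b : nat)).
  apply: eq_bigr => i _; rewrite big_bool /= expr1 expr0 alg_polyC addrC //.
rewrite bigA_distr_bigA; apply: eq_bigr => f _.
by rewrite scaler_prod prodrXr.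
Qed.

Lemma pb_ffun N (w : 'I_N -> R) k :
  pb (map w (index_enum 'I_N)) k = \sum_(f : {ffun 'I_N -> bool} | cnt f == k) wt w f.
Proof. by rewrite -coefG G_ffun coef_sumMXn. Qed.

Lemma tl_ffun N (w : 'I_N -> R) t : (t <= N.+1)%N ->
  tl (map w (index_enum 'I_N)) t = \sum_(f : {ffun 'I_N -> bool} | (t <= cnt f)%N) wt w f.
Proof.
have hs : size (map w (index_enum 'I_N)) = N.
  by rewrite size_map [index_enum _]unlock -enumT size_enum_ord.
move=> ht; rewrite tl_sum_ord hs //.
under eq_bigr do rewrite pb_ffun big_mkcond.
rewrite exchange_big [RHS]big_mkcond /=; apply: eq_bigr => f _.
rewrite -big_mkcondr.
under eq_bigl do rewrite eq_sym.
rewrite (big_ord1_cond_eq _ (fun _ => wt w f) (fun k => (t <= k)%N)) /=.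
by rewrite ltnS cnt_le.
Qed.
End Bridge.

End PilotAux.
Import PilotAux.

Local Open Scope classical_set_scope.
Theorem lemma11 (d : measure_display) (T : measurableType d) (R : realType)
  (P : probability T R) (N : nat) (z : 'I_N -> T -> bool) (q : 'I_N -> R)
  (hN : (0 < N)%N)
  (hq : forall i, 0 < q i < 1)
  (hz : indep_bernoulli P z q)
  (hmin : qmin q > N%:R^-1) :
  ((4%:R^-1 : R)%:E < P [set w | (N%:R * qmin q < bsum R z w)%R])%E.
Proof.
case: hz => hmz hPz hind.
set p := qmin q in hmin *.
have hpq : forall i, p <= q i.
  by move=> i; rewrite /p /qmin (bigD1 i) //= ge_min lexx.
have N0 : 0 < N%:R :> R by rewrite ltr0n.
have p0 : 0 < p by apply: lt_trans hmin; rewrite invr_gt0.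
have hNp : 1 < N%:R * p.
  by rewrite -(ltr_pM2l N0) mulfV ?gt_eqF in hmin.
have Np0 : 0 <= N%:R * p by rewrite mulr_ge0 ?ler0n ?ltW.
have [c hc] : exists c, Num.truncn (N%:R * p) = c.+1.
  exists (Num.truncn (N%:R * p)).-1; rewrite prednK // truncn_gt0; exact: ltW.
have /andP[hc1 hc2] := truncn_itv Np0.
rewrite hc in hc1 hc2.
have cN : (c.+1 < N)%N.
  have p1 : p < 1 by apply: le_lt_trans (hpq (Ordinal hN)) _; case/andP: (hq (Ordinal hN)).
  rewrite -(ltr_nat R); apply: le_lt_trans hc1 _.
  by rewrite -{2}(mulr1 N%:R) ltr_pM2l.
have ecnt : forall K : nat, (N%:R * p < K%:R) = (c.+2 <= K)%N.
  move=> K; apply/idP/idP => h.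
  - rewrite leqNgt; apply/negP => hK.
    have : K%:R <= c.+1%:R :> R by rewrite ler_nat -ltnS.
    move: h hc1; lra.
  - have : c.+2%:R <= K%:R :> R by rewrite ler_nat.
    move: hc2; lra.
pose Pr : {pred {ffun 'I_N -> bool}} := [pred f | (c.+2 <= cnt f)%N].
pose atom (f : {ffun 'I_N -> bool}) := [set w | forall i, z i w = f i].
have ev : [set w | N%:R * p < bsum R z w] = \bigcup_(f in [set` Pr]) atom f.
  apply/seteqP; split => w /=.
  - move=> h; exists [ffun i => z i w].
      by rewrite /= inE /Pr /= -ecnt /cnt; under eq_bigr do rewrite ffunE.
    by move=> i; rewrite ffunE.
  - move=> [f]; rewrite /= inE /Pr /= => hf hw.
    rewrite /bsum ecnt /cnt; under eq_bigr do rewrite hw; exact: hf.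
have triv : trivIset [set` Pr] atom.
  move=> f g _ _ [w [hf hg]]; apply/ffunP => i; by rewrite -hf -hg.
have hA : forall i, [set w | z i w = true] = [set w | z i w] by [].
have hC : forall i, [set w | z i w = false] = ~` [set w | z i w].
  by move=> i; apply/seteqP; split => w /=; case: (z i w).
have matom : forall f, [set` Pr] f -> measurable (atom f).
  move=> f _.
  have -> : atom f = \bigcap_(i in [set: 'I_N]) [set w | z i w = f i].
    apply/seteqP; split => w /= h.
    - by move=> i _; apply: h.
    - by move=> i; apply: h.
  apply: fin_bigcap_measurable; first exact: finite_finset.
  move=> i _; case: (f i); first by rewrite hA; exact: hmz.
  by rewrite hC; exact/measurableC/hmz.
rewrite ev measure_fin_bigcup //.
rewrite (eq_fsbigr (fun f => (wt q f)%:E)); last first.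
  move=> f _; apply: eq_trans (hind f) _; congr (_%:E); apply: eq_bigr => i _.
  case: (f i); first by rewrite hA hPz.
  by rewrite hC probability_setC ?hPz.
rewrite -(@bigfs _ _ _ _ (index_enum _)) ?index_enum_uniq //; last by move=> f _; rewrite mem_index_enum.
rewrite sumEFin lte_fin.
rewrite (eq_bigl (fun f => (c.+2 <= cnt f)%N)) // -tl_ffun //.
have hs : size (map q (index_enum 'I_N)) = N.
  by rewrite size_map [index_enum _]unlock -enumT size_enum_ord.
rewrite -div1r; apply: (@core R _ p); rewrite ?hs //.
move=> r /mapP [i _ ->]; rewrite hpq /=; case/andP: (hq i) => //.
by rewrite ltnS ltnW.
Qed.
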